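(* Let $M$ be a compact complex manifold with Kobayashi pseudodistance $d_M$. Then for every $x\in M$ the equivalence class $M_x=\{y\in M: d_M(x,y)=0\}$ is connected.
   Context: The Kobayashi pseudometric $d_M$ is the largest pseudometric on $M$ such that every holomorphic map from the unit disk with its Poincaré metric to $(M,d_M)$ is distance-decreasing. *)

(* Defs.v *)
From HB Require Import structures.
From mathcomp Require Import all_boot all_order all_algebra.
From mathcomp Require Import all_classical all_reals all_analysis.
From mathcomp Require Import complex.
Import Order.TTheory GRing.Theory Num.Theory numFieldNormedType.Exports.

Set Implicit Arguments.
Unset Strict Implicit.
Unset Printing Implicit Defensive.

Local Open Scope ring_scope.
Local Open Scope classical_set_scope.

(* The complex numbers are R[i] = complex R for R : realType; they are a
   normed field, and the (regular) normed space R[i]^o over R[i] is used as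
   the domain of holomorphic maps of one variable, while 'rV[R[i]]_n is C^n.
   "differentiable" over the field R[i] is complex (Frechet) differentiability,
   i.e. holomorphy. *)

Definition Cn (R : realType) (n : nat) : normedModType R[i] := 'rV[R[i]]_n.

Definition unit_disk (R : realType) : set (R[i])^o :=
  [set z | Normc.normc (z : R[i]) < 1].
Arguments unit_disk R : clear implicits.

Definition poincare_dist (R : realType) (z w : (R[i])^o) : R :=
  let t := Normc.normc ((z : R[i]) - w) / Normc.normc (1 - (w : R[i])^* * z) in
  ln ((1 + t) / (1 - t)).

Record cplx_atlas (R : realType) (T : topologicalType) (n : nat) := CplxAtlas {
  chart_index : Type;
  chart_dom : chart_index -> set T;
  chart_map : chart_index -> T -> Cn R n }.
Arguments chart_index {R T n} _.
Arguments chart_dom {R T n} _ _.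
Arguments chart_map {R T n} _ _.

Definition is_cplx_atlas (R : realType) (T : topologicalType) (n : nat)
    (A : cplx_atlas R T n) : Prop :=
  (forall i, open (chart_dom A i)) /\
  (forall x : T, exists i, chart_dom A i x) /\
  (forall i x, chart_dom A i x -> {for x, continuous (chart_map A i)}) /\
  (forall i x y, chart_dom A i x -> chart_dom A i y ->
     chart_map A i x = chart_map A i y -> x = y) /\
  (forall i (V : set T), open V -> V `<=` chart_dom A i ->
     open (chart_map A i @` V)) /\
  (forall i j, exists g : Cn R n -> Cn R n,
     forall y, chart_dom A i y -> chart_dom A j y ->
       g (chart_map A i y) = chart_map A j y /\
       differentiable g (chart_map A i y)).

Definition compact_complex_manifold (R : realType) (T : topologicalType) (n : nat)
    (A : cplx_atlas R T n) : Prop :=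
  hausdorff_space T /\ compact [set: T] /\ is_cplx_atlas A.

Definition holo_disk_map (R : realType) (T : topologicalType) (n : nat)
    (A : cplx_atlas R T n) (f : (R[i])^o -> T) : Prop :=
  (forall z, unit_disk R z -> {for z, continuous f}) /\
  (forall i, exists g : (R[i])^o -> Cn R n,
     forall z, unit_disk R z -> chart_dom A i (f z) ->
       g z = chart_map A i (f z) /\ differentiable g z).

Definition pseudometric (R : realType) (T : Type) (d : T -> T -> \bar R) : Prop :=
  (forall x, d x x = 0%E) /\
  (forall x y, (0 <= d x y)%E) /\
  (forall x y, d x y = d y x) /\
  (forall x y z, (d x z <= d x y + d y z)%E).

Definition kobayashi_admissible (R : realType) (T : topologicalType) (n : nat)
    (A : cplx_atlas R T n) (d : T -> T -> \bar R) : Prop :=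
  pseudometric d /\
  forall f, holo_disk_map A f ->
    forall z w, unit_disk R z -> unit_disk R w ->
      (d (f z) (f w) <= (poincare_dist z w)%:E)%E.

(* The Kobayashi pseudodistance: the largest admissible pseudometric, i.e. the
   pointwise supremum of all admissible ones. *)
Definition kobayashi (R : realType) (T : topologicalType) (n : nat)
    (A : cplx_atlas R T n) (x y : T) : \bar R :=
  ereal_sup [set d x y | d in kobayashi_admissible A].

(* Main.v *)
Require Import Defs.
From HB Require Import structures.
From mathcomp Require Import all_boot all_order all_algebra.
From mathcomp Require Import all_classical all_reals all_analysis.
From mathcomp Require Import complex.
From mathcomp Require Import ring lra.
Import Order.TTheory GRing.Theory Num.Theory numFieldNormedType.Exports.
Local Open Scope ring_scope.
Local Open Scope classical_set_scope.

Set Implicit Arguments.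
Unset Strict Implicit.


Section Cx.
Variable R : realType.
Local Notation nc := (@Normc.normc R).

Lemma seg_claim (a b c d s : R) : a^+2 + b^+2 < 1 -> c^+2 + d^+2 < 1 -> 0 <= s <= 1 ->
  s^+2 * ((1 - (c*a + d*b))^+2 + (c*b - d*a)^+2) <=
  (1 - ((a + s * (c - a))*a + (b + s * (d - b))*b))^+2 + ((a + s * (c - a))*b - (b + s * (d - b))*a)^+2.
Proof.
move=> h1 h2 /andP[s0 s1].
set u := (a + s * (c - a)); set v := (b + s * (d - b)).
have hA : 0 <= (1 - s) * (1 - (a^+2 + b^+2)) by apply: mulr_ge0; lra.
have hB : 0 <= 1 - (c*a + d*b) by have := sqr_ge0 (a - c); have := sqr_ge0 (b - d); nra.
have e1 : 1 - (u*a + v*b) = (1 - s) * (1 - (a^+2 + b^+2)) + s * (1 - (c*a + d*b)).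
  rewrite /u /v; ring.
have e2 : u*b - v*a = s * (c*b - d*a) by rewrite /u /v; ring.
rewrite e1 e2.
have := mulr_ge0 hA (mulr_ge0 s0 hB).
nra.
Qed.
End Cx.

Section Cx2.
Local Open Scope complex_scope.
Variable R : realType.
Local Notation nc := (@Normc.normc R).

Lemma nc_sqr (z : R[i]) : nc z ^+ 2 = complex.Re z ^+ 2 + complex.Im z ^+ 2.
Proof. by case: z => a b /=; rewrite sqr_sqrtr // addr_ge0 // sqr_ge0. Qed.

Lemma nc_ge0 (z : R[i]) : 0 <= nc z.
Proof. by case: z => a b /=; exact: sqrtr_ge0. Qed.

Lemma nc_lt (z w : R[i]) : nc z < nc w <-> complex.Re z ^+ 2 + complex.Im z ^+ 2 < complex.Re w ^+ 2 + complex.Im w ^+ 2.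
Proof.
rewrite -!nc_sqr; split => h.
  by rewrite ltr_pXn2r // ?nc_ge0 // ?nnegrE ?nc_ge0.
by rewrite -(ltr_pXn2r (_ : 0 < 2)%N) // ?nnegrE ?nc_ge0.
Qed.

Lemma nc_le (z w : R[i]) : nc z <= nc w <-> complex.Re z ^+ 2 + complex.Im z ^+ 2 <= complex.Re w ^+ 2 + complex.Im w ^+ 2.
Proof.
rewrite -!nc_sqr; split => h.
  by rewrite ler_pXn2r // ?nnegrE ?nc_ge0.
by rewrite -(ler_pXn2r (_ : 0 < 2)%N) // ?nnegrE ?nc_ge0.
Qed.

Lemma nc_lt1 (z : R[i]) : nc z < 1 <-> complex.Re z ^+ 2 + complex.Im z ^+ 2 < 1.
Proof.
rewrite -{1}Normc.normc1 nc_lt /= expr0n /= addr0 expr1n; by [].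
Qed.
Lemma nc_lt1P (z : R[i]) : nc z < 1 -> complex.Re z ^+ 2 + complex.Im z ^+ 2 < 1.
Proof. by move/nc_lt1. Qed.
Lemma nc_lt1I (z : R[i]) : complex.Re z ^+ 2 + complex.Im z ^+ 2 < 1 -> nc z < 1.
Proof. by move/nc_lt1. Qed.

Lemma disk_t_lt1 (z w : R[i]) : nc z < 1 -> nc w < 1 ->
  nc (z - w) < nc (1 - w^* * z).
Proof.
case: z => a b; case: w => c d.
rewrite -[1]Normc.normc1 !nc_lt /= => h1 h2.
rewrite !expr0n /= !addr0 in h1 h2 *.
simpc.
nra.
Qed.

Lemma disk_conv (z w : R[i]) (s : R) : nc z < 1 -> nc w < 1 -> 0 <= s <= 1 ->
  nc (z + s%:C * (w - z)) < 1.
Proof.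
move=> hz hw /andP[s0 s1].
have h1 := nc_lt1P hz; have h2 := nc_lt1P hw.
apply: nc_lt1I.
move: h1 h2; case: z {hz} => a b; case: w {hw} => c d /= h1 h2.
simpc.
have := sqr_ge0 (a - c); have := sqr_ge0 (b - d).
have hs' : 0 <= 1 - s by lra.
have := mulr_ge0 s0 hs'.
move=> p1 p2 p3.
have e : (a + s * (c - a)) ^+ 2 + (b + s * (d - b)) ^+ 2 =
  (1 - s) * (a^+2 + b^+2) + s * (c^+2 + d^+2) - s * (1 - s) * ((a - c)^+2 + (b - d)^+2) by ring.
rewrite e.
have q1 : 0 <= s * (1 - s) * ((a - c)^+2 + (b - d)^+2) by rewrite mulr_ge0 // addr_ge0.
have q2 : (1 - s) * (a^+2 + b^+2) + s * (c^+2 + d^+2) < 1.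
  have -> : 1 = (1 - s) * 1 + s * 1 by ring.
  have [->|sp] := eqVneq s 0; first by nra.
  have sp' : 0 < s by rewrite lt_def sp s0.
  nra.
lra.
Qed.

Lemma nc_seg_num (z w : R[i]) (s : R) : 0 <= s ->
  nc (z - (z + s%:C * (w - z))) = s * nc (z - w).
Proof.
move=> s0.
have h1 : 0 <= s * nc (z - w) by rewrite mulr_ge0 // nc_ge0.
apply/eqP; rewrite -(eqrXn2 (_ : 0 < 2)%N) ?nc_ge0 //.
clear h1; rewrite exprMn !nc_sqr; case: z => a b; case: w => c d /=.
simpc; apply/eqP; ring.
Qed.

Lemma nc_seg_den (z w : R[i]) (s : R) : nc z < 1 -> nc w < 1 -> 0 <= s <= 1 ->
  s * nc (1 - w^* * z) <= nc (1 - (z + s%:C * (w - z))^* * z).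
Proof.
move=> hz hw hs.
have h0 : 0 <= s * nc (1 - w^* * z) by case/andP: hs => s0 _; rewrite mulr_ge0 // nc_ge0.
rewrite -(ler_pXn2r (_ : 0 < 2)%N) ?nnegrE ?nc_ge0 //.
rewrite exprMn !nc_sqr.
have h1 := nc_lt1P hz; have h2 := nc_lt1P hw.
clear h0; move: h1 h2; case: z {hz} => a b; case: w {hw} => c d /= h1 h2.
simpc.
have := seg_claim h1 h2 hs.
move=> H; have E1 : forall x y : R, x = y -> x <= y by move=> x y ->.
rewrite (le_trans _ (le_trans H (E1 _ _ _))) //; [apply: E1|]; ring.
Qed.

Definition tr (z w : R[i]) : R := nc (z - w) / nc (1 - w^* * z).
Definition rh (t : R) : R := ln ((1 + t) / (1 - t)).

Lemma tr_bounds (z w : R[i]) : nc z < 1 -> nc w < 1 -> 0 <= tr z w < 1.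
Proof.
move=> hz hw; have h := disk_t_lt1 hz hw.
have d0 : 0 < nc (1 - w^* * z) by apply: le_lt_trans h; exact: nc_ge0.
rewrite /tr divr_ge0 ?nc_ge0 //= ltr_pdivrMr // mul1r //.
Qed.

Lemma tr_seg (z w : R[i]) (s : R) : nc z < 1 -> nc w < 1 -> 0 <= s <= 1 ->
  tr z (z + s%:C * (w - z)) <= tr z w.
Proof.
move=> hz hw hs; have /andP[s0 s1] := hs.
have hzeta := disk_conv hz hw hs.
have d0 : 0 < nc (1 - w^* * z) by apply: le_lt_trans (disk_t_lt1 hz hw); exact: nc_ge0.
have d1 : 0 < nc (1 - (z + s%:C * (w - z))^* * z).
  by apply: le_lt_trans (disk_t_lt1 hz hzeta); exact: nc_ge0.
rewrite /tr nc_seg_num // ler_pdivrMr // mulrAC ler_pdivlMr //.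
rewrite mulrAC [X in _ <= X]mulrC; apply: ler_wpM2r; first exact: nc_ge0.
exact: nc_seg_den.
Qed.

Lemma rh_mono (t1 t2 : R) : 0 <= t1 -> t1 <= t2 -> t2 < 1 -> rh t1 <= rh t2.
Proof.
move=> h1 h2 h3; rewrite /rh ler_ln ?posrE; last 2 first.
- by rewrite divr_gt0 //; lra.
- by rewrite divr_gt0 //; lra.
rewrite ler_pdivrMr; last lra.
rewrite mulrAC ler_pdivlMr; last lra.
nra.
Qed.

Lemma rh_ge0 (t : R) : 0 <= t < 1 -> 0 <= rh t.
Proof.
move=> /andP[h1 h2]; have := rh_mono (lexx 0) h1 h2.
by rewrite /rh subr0 addr0 divr1 ln1.
Qed.

Lemma tr_sym (z w : R[i]) : tr z w = tr w z.
Proof.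
rewrite /tr; congr (_ / _).
  by rewrite -normcN opprB.
case: z => a b; case: w => c d /=; simpc; congr Num.sqrt; ring.
Qed.

Lemma tr0 (s : R) : 0 <= s -> tr 0 s%:C = s.
Proof.
move=> s0; rewrite /tr mulr0 subr0 sub0r normcN Normc.normc1 divr1 /=.
by rewrite expr0n /= addr0 sqrtr_sqr ger0_norm.
Qed.

Lemma rh_small (e : R) : 0 < e -> exists2 eta : R, 0 < eta &
  forall t, 0 <= t -> t < eta -> rh t <= e.
Proof.
move=> e0; have E1 : 1 < expR e by rewrite expR_gt1.
exists ((expR e - 1) / (expR e + 1)); first by rewrite divr_gt0 //; lra.
move=> t t0; rewrite ltr_pdivlMr; last lra.
move=> ht.
have t1 : t < 1.
  have : (expR e - 1) < (expR e + 1) by lra.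
  nra.
rewrite -[e]expRK /rh ler_ln ?posrE ?expR_gt0 //; last by rewrite divr_gt0 //; lra.
rewrite ler_pdivrMr; last lra.
nra.
Qed.
End Cx2.


Section Kob.
Variables (R : realType) (T : topologicalType) (n : nat) (A : cplx_atlas R T n).
Local Notation K := (kobayashi A).
Local Notation nc := (@Normc.normc R).

Lemma pdE (z w : (R[i])^o) : poincare_dist z w = rh (tr z w).
Proof. by []. Qed.

Lemma pd_ge0 (z w : (R[i])^o) : unit_disk R z -> unit_disk R w -> 0 <= poincare_dist z w.
Proof. by move=> hz hw; rewrite pdE; apply: rh_ge0; exact: tr_bounds. Qed.

Lemma pd_sym (z w : (R[i])^o) : poincare_dist z w = poincare_dist w z.
Proof. by rewrite !pdE tr_sym. Qed.

Lemma zero_adm : kobayashi_admissible A (fun _ _ => 0%E).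
Proof.
split; first by split=> //; split=> //; split=> // *; rewrite adde0.
by move=> f _ z w hz hw; rewrite lee_fin; exact: pd_ge0.
Qed.

Lemma K_ub d x y : kobayashi_admissible A d -> (d x y <= K x y)%E.
Proof. by move=> hd; apply: ereal_sup_ubound; exists d. Qed.

Lemma K_le x y (c : \bar R) :
  (forall d, kobayashi_admissible A d -> (d x y <= c)%E) -> (K x y <= c)%E.
Proof. by move=> h; apply: ge_ereal_sup => _ [d hd <-]; exact: h. Qed.

Lemma K_ge0 x y : (0 <= K x y)%E.
Proof. exact: (K_ub x y zero_adm). Qed.

Lemma K_refl x : K x x = 0%E.
Proof.
apply/eqP; rewrite eq_le K_ge0 andbT; apply: K_le => d [[h _] _]; by rewrite h.
Qed.

Lemma K_sym x y : K x y = K y x.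
Proof.
by apply/eqP; rewrite eq_le; apply/andP; split; apply: K_le => d hd;
  case: (hd) => [[_ [_ [hs _]]] _]; rewrite hs; exact: K_ub.
Qed.

Lemma K_tri x y z : (K x z <= K x y + K y z)%E.
Proof.
apply: K_le => d hd; case: (hd) => [[_ [_ [_ ht]]] _].
apply: (le_trans (ht x y z)); apply: leeD; exact: K_ub.
Qed.

Lemma K_holo f z w : holo_disk_map A f -> unit_disk R z -> unit_disk R w ->
  (K (f z) (f w) <= (poincare_dist z w)%:E)%E.
Proof. by move=> hf hz hw; apply: K_le => d [_ h]; exact: h. Qed.

End Kob.


Section Near.
Variables (R : realType) (T : topologicalType) (n : nat) (A : cplx_atlas R T n).
Local Notation K := (kobayashi A).
Local Notation nc := (@Normc.normc R).

Lemma affine_diff (c w : Cn R n) (z : (R[i])^o) :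
  differentiable (fun zeta : (R[i])^o => c + (zeta : R[i]) *: w) z.
Proof.
apply: differentiableD; first exact: differentiable_cst.
apply: (@differentiableZl _ _ _ (fun zeta : (R[i])^o => (zeta : R[i]))).
exact: ex_diff.
Qed.


Section Chart.
Variables (V : set T) (phi : T -> Cn R n) (p : T).
Hypothesis Vp : V p.
Hypothesis inj : forall x y, V x -> V y -> phi x = phi y -> x = y.
Hypothesis oV : open V.
Hypothesis omap : forall U : set T, open U -> U `<=` V -> open (phi @` U).

Definition psi (y : Cn R n) : T :=
  match pselect (exists a, V a /\ phi a = y) with
  | left h => projT1 (cid h)
  | right _ => p
  end.

Lemma psi_in y : (phi @` V) y -> V (psi y) /\ phi (psi y) = y.
Proof.
move=> [a Va <-]; rewrite /psi; case: pselect => [h|]; last first.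
  by move=> hn; exfalso; apply: hn; exists a.
by case: (cid h).
Qed.

Lemma psiK a : V a -> psi (phi a) = a.
Proof.
move=> Va; have [h1 h2] := psi_in (ex_intro2 _ _ a Va erefl).
exact: inj.
Qed.

Lemma psi_cont y : (phi @` V) y -> {for y, continuous psi}.
Proof.
move=> [a Va <-] U /=; rewrite (psiK Va).
rewrite nbhsE /=; move=> [Ob [oO Oa] OU].
have oW : open (phi @` (Ob `&` V)) by apply: omap; [exact: openI|exact: subIsetr].
have : nbhs (phi a) (phi @` (Ob `&` V)) by apply: open_nbhs_nbhs; split => //; exists a.
apply: filterS => y' [b [Obb Vb] <-] /=; rewrite psiK //; exact: OU.
Qed.

Lemma normC_nc (z : R[i]) : `|z| = (nc z)%:C%C.
Proof. by case: z => a b; rewrite normc_def. Qed.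

Lemma disk_norm (z : (R[i])^o) : unit_disk R z -> `|(z : R[i])| < 1.
Proof. by rewrite /unit_disk /= normC_nc => h; rewrite -[1]/(1%:C)%C ltcR. Qed.

Lemma chart_disk (c w : Cn R n) (r : R[i])
  (htr : forall j, exists g : Cn R n -> Cn R n, forall y, V y -> chart_dom A j y ->
     g (phi y) = chart_map A j y /\ differentiable g (phi y))
  (r0 : 0 < r) (hball : ball c r `<=` phi @` V) (hw : `|w| <= r) :
  holo_disk_map A (fun z : (R[i])^o => psi (c + (z : R[i]) *: w)).
Proof.
have inb z : unit_disk R z -> (phi @` V) (c + (z : R[i]) *: w).
  move=> hz; apply: hball; rewrite -ball_normE /= opprD addrA subrr sub0r normrN normrZ.
  have hz1 := disk_norm hz.
  apply: (le_lt_trans (ler_wpM2l (normr_ge0 _) hw)).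
  by rewrite gtr_pMl.
split.
  move=> z hz; apply: (continuous_comp (f := fun z : (R[i])^o => c + (z : R[i]) *: w) (g := psi)).
    exact/differentiable_continuous/affine_diff.
  exact/psi_cont/inb.
move=> j; have [Tj hTj] := htr j.
exists (Tj \o (fun z : (R[i])^o => c + (z : R[i]) *: w)) => z hz hj.
have [hV hphi] := psi_in (inb z hz).
have [e1 e2] := hTj _ hV hj.
rewrite /= -e1 hphi; split => //.
apply: differentiable_comp; first exact: affine_diff.
by rewrite -hphi.
Qed.
End Chart.


Lemma small_t (e : R) : 0 < e -> exists t : R, 0 < t /\ t < 1 /\ rh t <= e.
Proof.
move=> e0; have [eta eta0 heta] := rh_small e0.
exists (Num.min (eta / 2) (1/2)).
have t0 : 0 < Num.min (eta / 2) (1/2) by rewrite lt_min; apply/andP; split; lra.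
split => //; split; first by rewrite gt_min; apply/orP; right; lra.
apply: heta; first exact: ltW.
by rewrite gt_min; apply/orP; left; lra.
Qed.

Lemma K_le_disk (f : (R[i])^o -> T) p q t e : holo_disk_map A f ->
  f (0 : R[i]) = p -> f ((t%:C)%C : R[i]) = q -> 0 <= t -> t < 1 -> rh t <= e ->
  (K p q <= e%:E)%E.
Proof.
move=> hf e1 e2 t0 t1 hte.
have d0 : unit_disk R (0 : (R[i])^o).
  by rewrite /unit_disk /= expr0n /= addr0 sqrtr0.
have dt : unit_disk R ((t%:C)%C : (R[i])^o).
  by rewrite /unit_disk /= expr0n /= addr0 sqrtr_sqr ger0_norm.
have := K_holo hf d0 dt.
rewrite e1 e2 pdE => /le_trans; apply.
by rewrite lee_fin tr0.
Qed.

Lemma tC_gt0 (t : R) : 0 < t -> (0 < t%:C)%C.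
Proof. by move=> t0; rewrite ltcR. Qed.

Lemma hw_lem (c d : Cn R n) (t : R) (r : R[i]) : 0 < t ->
  ball c ((t%:C)%C * r) d -> `|((t%:C)%C)^-1 *: (d - c)| <= r.
Proof.
move=> t0 bq; have tC0 := tC_gt0 t0.
rewrite normrZ normfV (gtr0_norm tC0) ler_pdivrMl //.
rewrite -ball_normE /= in bq.
by rewrite distrC; apply: ltW.
Qed.

Lemma near_step (V : set T) (phi : T -> Cn R n) p (e : R)
  (Vp : V p) (inj : forall x y, V x -> V y -> phi x = phi y -> x = y)
  (oV : open V) (omap : forall U : set T, open U -> U `<=` V -> open (phi @` U))
  (htr : forall j, exists g : Cn R n -> Cn R n, forall y, V y -> chart_dom A j y ->
     g (phi y) = chart_map A j y /\ differentiable g (phi y))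
  (r : R[i]) (r0 : 0 < r) (hball : ball (phi p) r `<=` phi @` V)
  (t : R) (t0 : 0 < t) (t1 : t < 1) (hte : rh t <= e) q (Vq : V q)
  (bq : ball (phi p) ((t%:C)%C * r) (phi q)) : (K p q <= e%:E)%E.
Proof.
have hw := hw_lem t0 bq.
have hf := chart_disk p inj oV omap htr r0 hball hw.
apply: (K_le_disk hf _ _ (ltW t0) t1 hte).
  by rewrite scale0r addr0 (psiK p inj Vp).
by rewrite scalerA mulfV ?gt_eqF ?tC_gt0 // scale1r addrC subrK (psiK p inj Vq).
Qed.

Lemma get_ball (V : set T) (phi : T -> Cn R n) p (Vp : V p)
  (oV : open V) (omap : forall U : set T, open U -> U `<=` V -> open (phi @` U)) :
  exists2 r : R[i], 0 < r & ball (phi p) r `<=` phi @` V.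
Proof.
have oW : open (phi @` V) := omap V oV (@subset_refl _ _).
have : nbhs (phi p) (phi @` V) by apply: open_nbhs_nbhs; split => //; exists p.
by move/nbhs_ballP => [r r0 hball]; exists r.
Qed.

Lemma get_nearA (phi : T -> Cn R n) p (s : R[i]) (s0 : 0 < s) :
  nbhs (phi p) (ball (phi p) s).
Proof. exact: nbhsx_ballx. Qed.

Lemma get_nearB (phi : T -> Cn R n) p (hc : {for p, continuous phi}) (B : set (Cn R n))
  (hb : nbhs (phi p) B) : nbhs p [set q | B (phi q)].
Proof. exact: hc. Qed.

Lemma get_near (V : set T) (phi : T -> Cn R n) p (oV : open V) (Vp : V p)
  (hc : {for p, continuous phi}) (s : R[i]) (s0 : 0 < s) :
  nbhs p (V `&` [set q | ball (phi p) s (phi q)]).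
Proof.
have hb2 := get_nearB hc (get_nearA phi p s0).
have hV : nbhs p V by apply: open_nbhs_nbhs.
exact: filterI hV hb2.
Qed.

Lemma near_chart (V : set T) (phi : T -> Cn R n) p (e : R)
  (Vp : V p) (inj : forall x y, V x -> V y -> phi x = phi y -> x = y)
  (oV : open V) (omap : forall U : set T, open U -> U `<=` V -> open (phi @` U))
  (htr : forall j, exists g : Cn R n -> Cn R n, forall y, V y -> chart_dom A j y ->
     g (phi y) = chart_map A j y /\ differentiable g (phi y))
  (hc : {for p, continuous phi}) : 0 < e ->
  \forall q \near p, (K p q <= e%:E)%E.
Proof.
move=> e0.
have [r r0 hball] := get_ball Vp oV omap.
have [t [t0 [t1 hte]]] := small_t e0.
have hrt : 0 < (t%:C)%C * r by apply: mulr_gt0 => //; exact: tC_gt0.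
have hq := get_near oV Vp hc hrt.
apply: filterS hq => q [Vq bq].
exact: (near_step Vp inj oV omap htr r0 hball t0 t1 hte Vq bq).
Qed.

Lemma K_near (hA : is_cplx_atlas A) p (e : R) : 0 < e ->
  \forall q \near p, (K p q <= e%:E)%E.
Proof.
move=> e0; case: hA => hopen [hcov [hcont [hinj [hopenmap htrans]]]].
have [i Vp] := hcov p.
exact: (near_chart Vp (hinj i) (hopen i) (hopenmap i) (htrans i) (hcont i p Vp) e0).
Qed.

End Near.


Section Seg.
Variables (R : realType).
Local Notation nc := (@Normc.normc R).

Lemma normC_real (x : R) : `|(x%:C)%C| = (`|x|%:C)%C :> R[i].
Proof. by rewrite normC_nc /= expr0n /= addr0 sqrtr_sqr. Qed.

Lemma realC_cont (s : R) : {for s, continuous (fun t : R => ((t%:C)%C : (R[i])^o))}.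
Proof.
apply/cvgrPdist_lt => eps eps0.
have hre : 0 < complex.Re eps by move: eps0; rewrite ltcE => /andP[_].
have him : complex.Im eps = 0 by move: eps0; rewrite ltcE => /andP[/eqP -> _].
have := nbhsx_ballx s (complex.Re eps) hre.
apply: filterS => t; rewrite -ball_normE /= => h.
rewrite -rmorphB normC_real.
rewrite [X in _ < X]complexE him /= mulr0 addr0 ltcR //.
Qed.

Definition seg (z w : (R[i])^o) (s : R) : (R[i])^o :=
  (z : R[i]) + ((s%:C)%C : R[i]) *: ((w : R[i]) - z : (R[i])^o).

Lemma segE (z w : (R[i])^o) s : seg z w s = (z : R[i]) + (s%:C)%C * ((w : R[i]) - z).
Proof. by []. Qed.

Lemma seg_cont z w s : {for s, continuous (seg z w)}.
Proof.
apply: continuousD; first exact: cst_continuous.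
apply: continuousZr_tmp; exact: realC_cont.
Qed.

Lemma seg_disk (z w : (R[i])^o) s : unit_disk R z -> unit_disk R w -> 0 <= s <= 1 ->
  unit_disk R (seg z w s).
Proof. by move=> hz hw hs; rewrite /unit_disk /= segE; exact: disk_conv. Qed.

Variables (T : topologicalType) (n : nat) (A : cplx_atlas R T n).
Local Notation K := (kobayashi A).

Lemma seg_connected f (z w : (R[i])^o) : holo_disk_map A f -> unit_disk R z -> unit_disk R w ->
  connected ((f \o seg z w) @` `[0, 1]).
Proof.
move=> [hf _] hz hw; apply: connected_continuous_connected; first exact: segment_connected.
apply: continuous_in_subspaceT => s; rewrite inE /= in_itv /= => hs.
apply: continuous_comp; first exact: seg_cont.
by apply: hf; exact: seg_disk.
Qed.

Lemma seg0 (z w : (R[i])^o) : seg z w 0 = z.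
Proof. by rewrite segE mul0r addr0. Qed.

Lemma seg1 (z w : (R[i])^o) : seg z w 1 = w.
Proof. by rewrite segE mul1r addrC subrK. Qed.

Lemma pd_seg (z w : (R[i])^o) s : unit_disk R z -> unit_disk R w -> 0 <= s <= 1 ->
  poincare_dist z (seg z w s) <= poincare_dist z w.
Proof.
move=> hz hw hs; rewrite !pdE.
have hz' := seg_disk hz hw hs.
have /andP[a0 _] := tr_bounds hz hz'.
have /andP[_ b1] := tr_bounds hz hw.
apply: rh_mono => //.
by rewrite segE; apply: tr_seg.
Qed.

Lemma seg_bound f (z w : (R[i])^o) s : holo_disk_map A f -> unit_disk R z -> unit_disk R w ->
  0 <= s <= 1 -> (K (f z) (f (seg z w s)) <= (poincare_dist z w)%:E)%E.
Proof.
move=> hf hz hw hs; apply: le_trans (K_holo hf hz (seg_disk hz hw hs)) _.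
by rewrite lee_fin; apply: pd_seg.
Qed.

End Seg.


Section Main.
Variables (R : realType) (T : topologicalType) (n : nat) (A : cplx_atlas R T n).
Hypothesis hA : is_cplx_atlas A.
Local Notation K := (kobayashi A).

Lemma pos_below (u : \bar R) : (0 < u)%E -> exists2 b : R, 0 < b & (b%:E < u)%E.
Proof.
case: u => [r||] //=.
- rewrite lte_fin => r0; exists (r / 2); first by rewrite divr_gt0.
  by rewrite lte_fin; lra.
- by move=> _; exists 1 => //; rewrite ltry.
Qed.

Lemma K_lsc x p (b c : R) : c < b -> (b%:E < K x p)%E ->
  \forall q \near p, (c%:E < K x q)%E.
Proof.
move=> cb hb; have e0 : 0 < b - c by rewrite subr_gt0.
apply: filterS (K_near hA p e0) => q hq.
rewrite ltNge; apply/negP => hle.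
have h := K_tri A x q p; rewrite (K_sym A q p) in h.
have : (K x p <= c%:E + (b - c)%:E)%E by apply: (le_trans h); exact: leeD.
rewrite -EFinD addrC subrK => /(lt_le_trans hb); rewrite ltxx.
by [].
Qed.

Lemma S_closed x : closed [set y | K x y = 0%E].
Proof.
rewrite -[X in closed X]setCK; apply: open_closedC; rewrite openE => p /= hp.
have hp0 : (0 < K x p)%E by rewrite lt_def K_ge0 andbT; apply/eqP.
have [b b0 hb] := pos_below hp0.
apply: filterS (K_lsc b0 hb) => q /= hq hq0.
by move: hq; rewrite hq0 ltxx.
Qed.

Lemma conn_split (P O1 O2 : set T) a b : connected P -> P `<=` O1 `|` O2 ->
  open O1 -> open O2 -> O1 `&` O2 = set0 -> P a -> O1 a -> P b -> O2 b -> False.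
Proof.
move=> cP sP o1 o2 d12 Pa O1a Pb O2b.
have h : P `&` O1 = P.
  apply: cP; first by exists a.
    by exists O1.
  exists (~` O2); first exact: open_closedC.
  apply/seteqP; split => y [Py hy]; split => //.
    by move=> O2y; have : (O1 `&` O2) y by []; rewrite d12.
  by case: (sP y Py).
have : (O1 `&` O2) b by split => //; rewrite -h in Pb; case: Pb.
by rewrite d12.
Qed.

Lemma unif x (F : set T) : compact [set: T] -> closed F ->
  (forall p, F p -> (0 < K x p)%E) ->
  exists2 d : R, 0 < d & forall p, F p -> (d%:E < K x p)%E.
Proof.
move=> hC clF hF.
have cF : compact F := subclosed_compact clF hC (@subsetT _ F).
have hcov : forall p, F p -> \forall q \near p & d \near (0 : R)^'+, (d%:E < K x q)%E.
  move=> p Fp; have [b b0 hb] := pos_below (hF p Fp).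
  have c0 : 0 < b / 2 by rewrite divr_gt0.
  have cb : b / 2 < b by lra.
  exists ([set q | ((b/2)%:E < K x q)%E], [set d : R | d < b / 2]).
    by split; [exact: K_lsc cb hb | exact: nbhs_right_lt].
  by move=> [q d] /= [hq hd]; apply: lt_trans hq; rewrite lte_fin.
have := (compact_near_coveringP F).1 cF R (0 : R)^'+ (fun d p => (d%:E < K x p)%E) _ hcov.
move=> hD; have {}hD := hD (@at_right_proper_filter R 0).
have [d [d0 hd]] := filter_ex (filterI (nbhs_right_gt 0) hD).
by exists d.
Qed.

End Main.


Section Final.
Variables (R : realType) (T : topologicalType) (n : nat) (A : cplx_atlas R T n).
Local Notation K := (kobayashi A).
Variables (x u : T) (d : R) (OU OV : set T).
Hypotheses (d0 : 0 < d) (oU : open OU) (oV : open OV) (dUV : OU `&` OV = set0)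
  (hSd : forall p, (K x p < d%:E)%E -> (OU `|` OV) p) (hu : K x u = 0%E).

Definition act q := OU q /\ (K u q < d%:E)%E.
Definition hfun q : R := if pselect (act q) then d - fine (K u q) else 0.

Lemma act_fin q : act q -> K u q = (fine (K u q))%:E /\ 0 <= fine (K u q) < d.
Proof.
move=> [_ hq]; have h0 := K_ge0 A u q.
have hf : K u q \is a fin_num by rewrite ge0_fin_numE // (lt_trans hq) // ltry.
split; first by rewrite fineK.
by rewrite -lee_fin -lte_fin fineK // h0.
Qed.

Lemma key1 f z w : holo_disk_map A f -> unit_disk R z -> unit_disk R w ->
  act (f z) -> ~ act (f w) -> d - fine (K u (f z)) <= poincare_dist z w.
Proof.
move=> hf hz hw az naw.
have [ea /andP[a0 ad]] := act_fin az.
set ar := fine (K u (f z)) in ea a0 ad *.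
rewrite leNgt; apply/negP => hlt.
have hb s : 0 <= s <= 1 -> (K u (f (seg z w s)) < d%:E)%E.
  move=> hs; apply: (le_lt_trans (K_tri A u (f z) _)).
  rewrite ea; apply: (le_lt_trans (leeD (lexx _) (seg_bound hf hz hw hs))).
  by rewrite -EFinD lte_fin; lra.
have hP : (f \o seg z w) @` `[0, 1] `<=` OU `|` OV.
  move=> _ [s hs <-]; apply: hSd.
  have hs' : 0 <= s <= 1 by move: hs; rewrite /= in_itv.
  apply: (le_lt_trans (K_tri A x u _)); rewrite hu add0e; exact: hb.
have h01 : `[0, 1] (0 : R) by rewrite /= in_itv /= lexx ler01.
have h11 : `[0, 1] (1 : R) by rewrite /= in_itv /= lexx ler01.
have hw1 : ~ OU (f w).
  move=> Ufw; apply: naw; split => //.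
  by rewrite -(seg1 z w); apply: hb; rewrite lexx ler01.
have hw2 : OV (f w).
  have : (OU `|` OV) (f w) by apply: hP; exists 1 => //=; rewrite seg1.
  by case.
apply: (conn_split (seg_connected hf hz hw) hP oU oV dUV (a := f z) (b := f w)).
- by exists 0 => //=; rewrite seg0.
- by case: az.
- by exists 1 => //=; rewrite seg1.
- exact: hw2.
Qed.

Lemma lip_both (z w : (R[i])^o) f : holo_disk_map A f -> unit_disk R z -> unit_disk R w ->
  act (f z) -> act (f w) ->
  `|(d - fine (K u (f z))) - (d - fine (K u (f w)))| <= poincare_dist z w.
Proof.
move=> hf hz hw az aw.
have [ez _] := act_fin az; have [ew _] := act_fin aw.
have k1 := K_holo hf hz hw; have k2 := K_holo hf hw hz.
have t1 := K_tri A u (f z) (f w); have t2 := K_tri A u (f w) (f z).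
have i1 : fine (K u (f w)) <= fine (K u (f z)) + poincare_dist z w.
  rewrite -lee_fin EFinD -ew -ez; apply: (le_trans t1); exact: leeD.
have i2 : fine (K u (f z)) <= fine (K u (f w)) + poincare_dist z w.
  rewrite -lee_fin EFinD -ew -ez pd_sym; apply: (le_trans t2); exact: leeD.
rewrite ler_norml; apply/andP; split; lra.
Qed.

Lemma hfun_lip f (z w : (R[i])^o) : holo_disk_map A f -> unit_disk R z -> unit_disk R w ->
  `|hfun (f z) - hfun (f w)| <= poincare_dist z w.
Proof.
move=> hf hz hw; rewrite /hfun.
case: pselect => az; case: pselect => aw.
- exact: lip_both.
- have [_ /andP[_ h]] := act_fin az.
  rewrite subr0 ger0_norm; last by rewrite subr_ge0 ltW.
  exact: key1.
- have [_ /andP[_ h]] := act_fin aw.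
  rewrite sub0r normrN ger0_norm; last by rewrite subr_ge0 ltW.
  by rewrite pd_sym; apply: key1.
- by rewrite subrr normr0; apply: pd_ge0.
Qed.

Lemma hfun_adm : kobayashi_admissible A (fun a b => (`|hfun a - hfun b|)%:E).
Proof.
split.
  split; first by move=> a; rewrite subrr normr0.
  split; first by move=> a b; rewrite lee_fin.
  split; first by move=> a b; rewrite distrC.
  by move=> a b c; rewrite -EFinD lee_fin; apply: ler_distD.
by move=> f hf z w hz hw; rewrite lee_fin; apply: hfun_lip.
Qed.

End Final.

Unset Implicit Arguments.
Set Strict Implicit.

Theorem mainTheorem9 (R : realType) (T : topologicalType) (n : nat)
    (A : cplx_atlas R T n) :
  compact_complex_manifold A ->
  forall x : T, connected [set y : T | kobayashi A x y = 0%E].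
Proof.
move=> [hH [hC hA]] x.
set S := [set y | kobayashi A x y = 0%E].
move=> B [u Bu] [C1 oC1 E1] [C2 cC2 E2].
have BS : B `<=` S by rewrite E1 => y [].
apply/seteqP; split => // v Sv; apply: contrapT => nBv.
have nC1v : ~ C1 v by move=> h; apply: nBv; rewrite E1.
have clS : closed S := S_closed hA (x:=x).
have clU : closed B by rewrite E2; exact: closedI.
have clV : closed (S `&` ~` C1) by apply: closedI => //; exact: open_closedC.
have dis : B `&` (S `&` ~` C1) = set0.
  by apply/seteqP; split => // y [By [_ nC1y]]; move: By; rewrite E1 => -[].
have hN := compact_normal hH hC.
have [OU [OV [oOU oOV BU VV dUV]]] := (normal_openP (R:=R)).1 hN _ _ clU clV dis.
pose F := ~` (OU `|` OV).
have clF : closed F by apply: open_closedC; exact: openU.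
have hF : forall p, F p -> (0 < kobayashi A x p)%E.
  move=> p Fp; rewrite lt_def K_ge0 andbT; apply/eqP => hp; apply: Fp.
  have Sp : S p by [].
  have [C1p|nC1p] := pselect (C1 p).
    by left; apply: BU; rewrite E1.
  by right; apply: VV.
have [dl dl0 hdl] := unif hA hC clF hF.
have hSd : forall p, (kobayashi A x p < dl%:E)%E -> (OU `|` OV) p.
  move=> p hp; apply: contrapT => np.
  by have := hdl p np; rewrite ltNge (ltW hp).
have hu : kobayashi A x u = 0%E := BS u Bu.
have adm := hfun_adm oOU oOV dUV hSd hu.
have := K_ub u v adm.
have hKuv : (kobayashi A u v <= 0)%E.
  apply: (le_trans (K_tri A u x v)).
  by rewrite (K_sym A u x) hu Sv adde0.
move/le_trans => /(_ _ hKuv).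
rewrite /hfun; case: pselect => au; last first.
  by exfalso; apply: au; split; [exact: BU|rewrite K_refl lte_fin].
case: pselect => av.
  move=> _; case: av => OUv _.
  have : (OU `&` OV) v by split => //; apply: VV.
  by rewrite dUV.
rewrite K_refl /= subr0 subr0 lee_fin ger0_norm; last exact: ltW.
by rewrite leNgt dl0.
Qed.
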